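(* Let $c>0$ and $\lambda\in C^2((0,\infty))$. Let $f_{++},f_{+-},f_{-+},f_{--}$ be sufficiently smooth (say $C^4$) functions of $(x,y,t)\in\mathbb{R}^2\times(0,\infty)$ satisfying $$\begin{aligned} \partial_t f_{++}&=-\tfrac c2\partial_x f_{++}-\tfrac c2\partial_y f_{++}+\tfrac{\lambda(t)}{2}(f_{-+}+f_{+-}-2f_{++}),\\ \partial_t f_{+-}&=-\tfrac c2\partial_x f_{+-}+\tfrac c2\partial_y f_{+-}+\tfrac{\lambda(t)}{2}(f_{--}+f_{++}-2f_{+-}),\\ \partial_t f_{-+}&=\tfrac c2\partial_x f_{-+}-\tfrac c2\partial_y f_{-+}+\tfrac{\lambda(t)}{2}(f_{++}+f_{--}-2f_{-+}),\\ \partial_t f_{--}&=\tfrac c2\partial_x f_{--}+\tfrac c2\partial_y f_{--}+\tfrac{\lambda(t)}{2}(f_{+-}+f_{-+}-2f_{--}). \end{aligned}$$ Then $p=f_{++}+f_{+-}+f_{-+}+f_{--}$ satisfies $$\begin{aligned} \frac{\partial^4 p}{\partial t^4}=&-4\lambda\frac{\partial^3 p}{\partial t^3}+\Big(\frac{c^2}{2}\Delta-5\lambda^2-4\lambda'\Big)\frac{\partial^2 p}{\partial t^2}+\Big(\lambda c^2\Delta-5\lambda\lambda'-2\lambda^3-\lambda''\Big)\frac{\partial p}{\partial t}\\ &-\frac{c^4}{16}\Big(\frac{\partial^2}{\partial x^2}-\frac{\partial^2}{\partial y^2}\Big)^2p+\frac{c^2}{2}\big(\lambda^2+\lambda'\big)\Delta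 p, \end{aligned}$$ where $\lambda=\lambda(t)$, $\lambda'=\frac{d\lambda}{dt}$, $\lambda''=\frac{d^2\lambda}{dt^2}$ and $\Delta=\frac{\partial^2}{\partial x^2}+\frac{\partial^2}{\partial y^2}$.
   Context: Interpretation: $f_{ab}$ are the joint densities of the position of a planar particle moving with velocity components $\pm c/2$ in the four diagonal directions $(a\,b)\in\{(++),(+-),(-+),(--)\}$, switching at the events of a non-homogeneous Poisson process of rate $\lambda(t)$ to one of the two orthogonal directions with probability $1/2$ each; $p$ is then the (absolutely continuous part of the) density of the position. *)

(* Defs.v *)
From Stdlib Require Import Reals Lra ClassicalEpsilon.
Open Scope R_scope.

(* Functions of (x, y, t) in R^2 x (0, oo); values at t <= 0 are irrelevant. *)
Definition fun3 := R -> R -> R -> R.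

(* Partial derivatives (the value of the limit when it exists; chosen
   by Hilbert's epsilon, so it is the genuine partial derivative
   whenever the latter exists). *)
Definition dx (f : fun3) : fun3 := fun x y t =>
  epsilon (inhabits 0) (fun l => derivable_pt_lim (fun s => f s y t) x l).
Definition dy (f : fun3) : fun3 := fun x y t =>
  epsilon (inhabits 0) (fun l => derivable_pt_lim (fun s => f x s t) y l).
Definition dt (f : fun3) : fun3 := fun x y t =>
  epsilon (inhabits 0) (fun l => derivable_pt_lim (fun s => f x y s) t l).

Definition cont3 (f : fun3) : Prop :=
  forall x y t, 0 < t -> forall eps, 0 < eps -> exists del, 0 < del /\
    forall x' y' t', Rabs (x' - x) < del -> Rabs (y' - y) < del ->
      Rabs (t' - t) < del -> Rabs (f x' y' t' - f x y t) < eps.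

Definition partials_exist (f : fun3) : Prop :=
  forall x y t, 0 < t ->
    (exists l, derivable_pt_lim (fun s => f s y t) x l) /\
    (exists l, derivable_pt_lim (fun s => f x s t) y l) /\
    (exists l, derivable_pt_lim (fun s => f x y s) t l).

Fixpoint Ck (k : nat) (f : fun3) : Prop :=
  match k with
  | O => cont3 f
  | S k' => cont3 f /\ partials_exist f /\ Ck k' (dx f) /\ Ck k' (dy f) /\ Ck k' (dt f)
  end.

Definition Lap (q : fun3) : fun3 := fun x y t => dx (dx q) x y t + dy (dy q) x y t.
Definition Hyp (q : fun3) : fun3 := fun x y t => dx (dx q) x y t - dy (dy q) x y t.

(* Main.v *)
Require Import Defs.
From Stdlib Require Import Reals.
From Stdlib Require Import Lra Lia ClassicalEpsilon FunctionalExtensionality PropExtensionality.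
From Coquelicot Require Coquelicot.
Open Scope R_scope.

Module SchwarzMod.
Import Coquelicot.Coquelicot.
Open Scope R_scope.

Lemma locally_strip (v0 r v : R) : Rabs (v - v0) < r ->
  locally v (fun z => Rabs (z - v0) < r).
Proof.
  intros H.
  assert (hp : 0 < r - Rabs (v - v0)) by lra.
  exists (mkposreal _ hp). intros z Hz.
  unfold ball in Hz; simpl in Hz. unfold AbsRing_ball in Hz.
  unfold abs, minus, plus, opp in Hz; simpl in Hz.
  replace (z - v0) with ((z + - v) + (v - v0)) by ring.
  eapply Rle_lt_trans; [apply Rabs_triang|]. lra.
Qed.

Lemma schwarz_loc (h : R -> R -> R) (u0 v0 r : R) (D1 D2 D12 D21 : R -> R -> R) :
 0 < r ->
 (forall u v, Rabs (v - v0) < r ->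
   derivable_pt_lim (fun z => h z v) u (D1 u v) /\
   derivable_pt_lim (fun z => h u z) v (D2 u v) /\
   derivable_pt_lim (fun z => D2 z v) u (D21 u v) /\
   derivable_pt_lim (fun z => D1 u z) v (D12 u v)) ->
 (forall eps, 0 < eps -> exists d, 0 < d /\ forall u v, Rabs (u-u0) < d -> Rabs (v-v0) < d ->
     Rabs (D21 u v - D21 u0 v0) < eps) ->
 (forall eps, 0 < eps -> exists d, 0 < d /\ forall u v, Rabs (u-u0) < d -> Rabs (v-v0) < d ->
     Rabs (D12 u v - D12 u0 v0) < eps) ->
 D21 u0 v0 = D12 u0 v0.
Proof.
  intros hr H C21 C12.
  assert (E2 : forall u v, Rabs (v - v0) < r -> Derive (fun t => h u t) v = D2 u v).
  { intros u v hv. apply is_derive_unique, is_derive_Reals. apply (H u v hv). }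
  assert (E1 : forall u v, Rabs (v - v0) < r -> Derive (fun t => h t v) u = D1 u v).
  { intros u v hv. apply is_derive_unique, is_derive_Reals. apply (H u v hv). }
  assert (A : forall u v, Rabs (v - v0) < r ->
     is_derive (fun z => Derive (fun t => h z t) v) u (D21 u v)).
  { intros u v hv. apply is_derive_ext with (f := fun z => D2 z v).
    - intros z. symmetry. apply E2; auto.
    - apply is_derive_Reals. apply (H u v hv). }
  assert (B : forall u v, Rabs (v - v0) < r ->
     is_derive (fun z => Derive (fun t => h t z) u) v (D12 u v)).
  { intros u v hv. apply is_derive_ext_loc with (f := fun z => D1 u z).
    - generalize (locally_strip v0 r v hv). apply filter_imp.
      intros z hz. symmetry. apply E1; auto.
    - apply is_derive_Reals. apply (H u v hv). }
  assert (A' : forall u v, Rabs (v - v0) < r ->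
     Derive (fun z => Derive (fun t => h z t) v) u = D21 u v).
  { intros u v hv; apply is_derive_unique, A; auto. }
  assert (B' : forall u v, Rabs (v - v0) < r ->
     Derive (fun z => Derive (fun t => h t z) u) v = D12 u v).
  { intros u v hv; apply is_derive_unique, B; auto. }
  assert (h0 : Rabs (v0 - v0) < r) by (rewrite Rminus_diag, Rabs_R0; lra).
  rewrite <- (is_derive_unique _ _ _ (A u0 v0 h0)).
  rewrite <- (is_derive_unique _ _ _ (B u0 v0 h0)).
  apply Schwarz.
  - exists (mkposreal r hr). intros u v hu hv. simpl in hu, hv.
    split; [|split; [|split]].
    + exists (D1 u v). apply is_derive_Reals. apply (H u v hv).
    + exists (D2 u v). apply is_derive_Reals. apply (H u v hv).
    + exists (D21 u v). apply A; auto.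
    + exists (D12 u v). apply B; auto.
  - intros eps. destruct (C21 eps (cond_pos eps)) as [d [hd hC]].
    assert (hm : 0 < Rmin d r) by (apply Rmin_pos; auto).
    exists (mkposreal _ hm). intros u v hu hv; simpl in hu, hv.
    assert (hv' : Rabs (v - v0) < r) by (eapply Rlt_le_trans; [eauto|apply Rmin_r]).
    rewrite (A' u v hv').
    rewrite (A' u0 v0 h0).
    apply hC; [eapply Rlt_le_trans; [exact hu|apply Rmin_l] | eapply Rlt_le_trans; [exact hv|apply Rmin_l]].
  - intros eps. destruct (C12 eps (cond_pos eps)) as [d [hd hC]].
    assert (hm : 0 < Rmin d r) by (apply Rmin_pos; auto).
    exists (mkposreal _ hm). intros u v hu hv; simpl in hu, hv.
    assert (hv' : Rabs (v - v0) < r) by (eapply Rlt_le_trans; [eauto|apply Rmin_r]).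
    rewrite (B' u v hv').
    rewrite (B' u0 v0 h0).
    apply hC; [eapply Rlt_le_trans; [exact hu|apply Rmin_l] | eapply Rlt_le_trans; [exact hv|apply Rmin_l]].
Qed.

End SchwarzMod.
Import SchwarzMod.
Open Scope R_scope.

Lemma dx_val f x y t l : derivable_pt_lim (fun s => f s y t) x l -> dx f x y t = l.
Proof.
  intros H. unfold dx.
  apply (uniqueness_limite (fun s => f s y t) x).
  - apply epsilon_spec. exists l; exact H.
  - exact H.
Qed.
Lemma dy_val f x y t l : derivable_pt_lim (fun s => f x s t) y l -> dy f x y t = l.
Proof.
  intros H. unfold dy.
  apply (uniqueness_limite (fun s => f x s t) y).
  - apply epsilon_spec. exists l; exact H.
  - exact H.
Qed.
Lemma dt_val f x y t l : derivable_pt_lim (fun s => f x y s) t l -> dt f x y t = l.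
Proof.
  intros H. unfold dt.
  apply (uniqueness_limite (fun s => f x y s) t).
  - apply epsilon_spec. exists l; exact H.
  - exact H.
Qed.

Lemma dx_eq f x y t l r : derivable_pt_lim (fun s => f s y t) x l -> l = r -> dx f x y t = r.
Proof. intros H <-; apply dx_val, H. Qed.
Lemma dy_eq f x y t l r : derivable_pt_lim (fun s => f x s t) y l -> l = r -> dy f x y t = r.
Proof. intros H <-; apply dy_val, H. Qed.
Lemma dt_eq f x y t l r : derivable_pt_lim (fun s => f x y s) t l -> l = r -> dt f x y t = r.
Proof. intros H <-; apply dt_val, H. Qed.

Lemma dpl_ext_pos F G t l : 0 < t -> (forall s, 0 < s -> F s = G s) ->
  derivable_pt_lim F t l -> derivable_pt_lim G t l.
Proof.
  intros ht hFG H eps he. destruct (H eps he) as [d hd].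
  assert (hm : 0 < Rmin d t) by (apply Rmin_pos; [apply cond_pos|lra]).
  exists (mkposreal _ hm). intros h hh0 hh. simpl in hh.
  assert (h1 : Rabs h < d) by (eapply Rlt_le_trans; [exact hh|apply Rmin_l]).
  assert (h2 : Rabs h < t) by (eapply Rlt_le_trans; [exact hh|apply Rmin_r]).
  assert (0 < t + h) by (apply Rabs_def2 in h2; lra).
  rewrite <- !hFG by lra. apply hd; auto.
Qed.

Lemma dpl_ext F G t l : (forall s, F s = G s) ->
  derivable_pt_lim F t l -> derivable_pt_lim G t l.
Proof.
  intros hFG H. replace G with F; auto. extensionality s; auto.
Qed.

Lemma dt_ext f g x y t : 0 < t -> (forall s, 0 < s -> f x y s = g x y s) ->
  dt f x y t = dt g x y t.
Proof.
  intros ht hfg. unfold dt. f_equal. extensionality l. apply propositional_extensionality.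
  split; apply dpl_ext_pos; auto. intros; symmetry; auto.
Qed.
Lemma dx_ext f g x y t : (forall s, f s y t = g s y t) -> dx f x y t = dx g x y t.
Proof.
  intros hfg. unfold dx.
  assert (E : (fun s => f s y t) = (fun s => g s y t)) by (extensionality s; auto).
  rewrite E. reflexivity.
Qed.
Lemma dy_ext f g x y t : (forall s, f x s t = g x s t) -> dy f x y t = dy g x y t.
Proof.
  intros hfg. unfold dy.
  assert (E : (fun s => f x s t) = (fun s => g x s t)) by (extensionality s; auto).
  rewrite E. reflexivity.
Qed.

Lemma Ck_S k f : Ck (S k) f -> Ck k f.
Proof.
  revert f; induction k; intros f H.
  - destruct H; simpl; auto.
  - destruct H as [h0 [h1 [h2 [h3 h4]]]]. split; [|split; [|split; [|split]]]; auto.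
Qed.
Lemma Ck_le n m f : (n <= m)%nat -> Ck m f -> Ck n f.
Proof.
  intros hle; induction hle; auto. intros H; apply IHhle, Ck_S, H.
Qed.
Lemma Ck_dx k f : Ck (S k) f -> Ck k (dx f). Proof. intros H; apply H. Qed.
Lemma Ck_dy k f : Ck (S k) f -> Ck k (dy f). Proof. intros H; apply H. Qed.
Lemma Ck_dt k f : Ck (S k) f -> Ck k (dt f). Proof. intros H; apply H. Qed.
Lemma Ck_cont k f : Ck k f -> cont3 f. Proof. destruct k; simpl; tauto. Qed.
Lemma Ck_pe k f : Ck (S k) f -> partials_exist f. Proof. simpl; tauto. Qed.

Lemma dlx f x y t : Ck 1 f -> 0 < t -> derivable_pt_lim (fun s => f s y t) x (dx f x y t).
Proof.
  intros H ht. destruct (Ck_pe _ _ H x y t ht) as [[l hl] _].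
  rewrite (dx_val _ _ _ _ _ hl). exact hl.
Qed.
Lemma dly f x y t : Ck 1 f -> 0 < t -> derivable_pt_lim (fun s => f x s t) y (dy f x y t).
Proof.
  intros H ht. destruct (Ck_pe _ _ H x y t ht) as [_ [[l hl] _]].
  rewrite (dy_val _ _ _ _ _ hl). exact hl.
Qed.
Lemma dlt f x y t : Ck 1 f -> 0 < t -> derivable_pt_lim (fun s => f x y s) t (dt f x y t).
Proof.
  intros H ht. destruct (Ck_pe _ _ H x y t ht) as [_ [_ [l hl]]].
  rewrite (dt_val _ _ _ _ _ hl). exact hl.
Qed.

Lemma dl_plus f g x a b : derivable_pt_lim f x a -> derivable_pt_lim g x b ->
  derivable_pt_lim (fun s => f s + g s) x (a + b).
Proof. intros; apply (derivable_pt_lim_plus f g); auto. Qed.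
Lemma dl_minus f g x a b : derivable_pt_lim f x a -> derivable_pt_lim g x b ->
  derivable_pt_lim (fun s => f s - g s) x (a - b).
Proof. intros; apply (derivable_pt_lim_minus f g); auto. Qed.
Lemma dl_opp f x a : derivable_pt_lim f x a ->
  derivable_pt_lim (fun s => - f s) x (- a).
Proof. intros; apply (derivable_pt_lim_opp f); auto. Qed.
Lemma dl_scal (k : R) f x a : derivable_pt_lim f x a ->
  derivable_pt_lim (fun s => k * f s) x (k * a).
Proof. intros; apply (derivable_pt_lim_scal f); auto. Qed.
Lemma dl_mult f g x a b : derivable_pt_lim f x a -> derivable_pt_lim g x b ->
  derivable_pt_lim (fun s => f s * g s) x (a * g x + f x * b).
Proof. intros; apply (derivable_pt_lim_mult f g); auto. Qed.
Lemma dl_const (k : R) x : derivable_pt_lim (fun _ => k) x 0.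
Proof. apply derivable_pt_lim_const. Qed.

Lemma cont3_ext f g : (forall x y t, 0 < t -> f x y t = g x y t) -> cont3 f -> cont3 g.
Proof.
  intros E H x y t ht eps he. destruct (H x y t ht eps he) as [d [hd hh]].
  exists (Rmin d t). split; [apply Rmin_pos; lra|].
  intros x' y' t' h1 h2 h3.
  assert (h3' : Rabs (t' - t) < t) by (eapply Rlt_le_trans; [exact h3|apply Rmin_r]).
  apply Rabs_def2 in h3'.
  rewrite <- !E by lra.
  apply hh; (eapply Rlt_le_trans; [eassumption|apply Rmin_l]).
Qed.

Lemma cont3_lin a b f g : cont3 f -> cont3 g ->
  cont3 (fun x y t => a * f x y t + b * g x y t).
Proof.
  intros Hf Hg x y t ht eps he.
  set (e' := eps / (2 * (Rabs a + Rabs b + 1))).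
  assert (hpos : 0 < Rabs a + Rabs b + 1) by (pose proof (Rabs_pos a); pose proof (Rabs_pos b); lra).
  assert (he' : 0 < e') by (unfold e'; apply Rdiv_lt_0_compat; lra).
  destruct (Hf x y t ht e' he') as [d1 [hd1 h1]].
  destruct (Hg x y t ht e' he') as [d2 [hd2 h2]].
  exists (Rmin d1 d2). split; [apply Rmin_pos; lra|].
  intros x' y' t' k1 k2 k3.
  assert (A := h1 x' y' t' ltac:(eapply Rlt_le_trans; [exact k1|apply Rmin_l])
     ltac:(eapply Rlt_le_trans; [exact k2|apply Rmin_l]) ltac:(eapply Rlt_le_trans; [exact k3|apply Rmin_l])).
  assert (B := h2 x' y' t' ltac:(eapply Rlt_le_trans; [exact k1|apply Rmin_r])
     ltac:(eapply Rlt_le_trans; [exact k2|apply Rmin_r]) ltac:(eapply Rlt_le_trans; [exact k3|apply Rmin_r])).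
  replace (a * f x' y' t' + b * g x' y' t' - (a * f x y t + b * g x y t))
    with (a * (f x' y' t' - f x y t) + b * (g x' y' t' - g x y t)) by ring.
  eapply Rle_lt_trans; [apply Rabs_triang|]. rewrite !Rabs_mult.
  assert (e' * (Rabs a + Rabs b + 1) < eps).
  { unfold e'. field_simplify; lra. }
  pose proof (Rabs_pos a); pose proof (Rabs_pos b).
  assert (Rabs a * Rabs (f x' y' t' - f x y t) <= Rabs a * e') by (apply Rmult_le_compat_l; lra).
  assert (Rabs b * Rabs (g x' y' t' - g x y t) <= Rabs b * e') by (apply Rmult_le_compat_l; lra).
  nra.
Qed.

Lemma pe_ext f g : (forall x y t, 0 < t -> f x y t = g x y t) -> partials_exist f -> partials_exist g.
Proof.
  intros E H x y t ht. destruct (H x y t ht) as [[l1 h1] [[l2 h2] [l3 h3]]].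
  split; [|split].
  - exists l1. eapply dpl_ext; [|exact h1]. intros; apply E; auto.
  - exists l2. eapply dpl_ext; [|exact h2]. intros; apply E; auto.
  - exists l3. eapply dpl_ext_pos; [exact ht| |exact h3]. intros; apply E; auto.
Qed.

Lemma Ck_ext k f g : (forall x y t, 0 < t -> f x y t = g x y t) -> Ck k f -> Ck k g.
Proof.
  revert f g; induction k; intros f g E H.
  - eapply cont3_ext; eauto.
  - destruct H as [h0 [h1 [h2 [h3 h4]]]].
    split; [|split; [|split; [|split]]].
    + eapply cont3_ext; eauto.
    + eapply pe_ext; eauto.
    + eapply IHk; [|exact h2]. intros x y t ht. apply dx_ext. intros; apply E; auto.
    + eapply IHk; [|exact h3]. intros x y t ht. apply dy_ext. intros; apply E; auto.
    + eapply IHk; [|exact h4]. intros x y t ht. apply dt_ext; auto.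
Qed.

Lemma Ck_lin k a b f g : Ck k f -> Ck k g -> Ck k (fun x y t => a * f x y t + b * g x y t).
Proof.
  revert f g; induction k; intros f g Hf Hg.
  - apply cont3_lin; auto.
  - assert (Hf' := Hf); assert (Hg' := Hg).
    destruct Hf as [f0 [f1 [f2 [f3 f4]]]]. destruct Hg as [g0 [g1 [g2 [g3 g4]]]].
    assert (C1f : Ck 1 f) by (eapply Ck_le; [|exact Hf']; lia).
    assert (C1g : Ck 1 g) by (eapply Ck_le; [|exact Hg']; lia).
    split; [|split; [|split; [|split]]].
    + apply cont3_lin; auto.
    + intros x y t ht. split; [|split].
      * eexists. apply dl_plus; apply dl_scal; apply dlx; auto.
      * eexists. apply dl_plus; apply dl_scal; apply dly; auto.
      * eexists. apply dl_plus; apply dl_scal; apply dlt; auto.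
    + eapply Ck_ext; [|apply (IHk _ _ f2 g2)]. intros x y t ht. symmetry.
      apply dx_val. apply dl_plus; apply dl_scal; apply dlx; auto.
    + eapply Ck_ext; [|apply (IHk _ _ f3 g3)]. intros x y t ht. symmetry.
      apply dy_val. apply dl_plus; apply dl_scal; apply dly; auto.
    + eapply Ck_ext; [|apply (IHk _ _ f4 g4)]. intros x y t ht. symmetry.
      apply dt_val. apply dl_plus; apply dl_scal; apply dlt; auto.
Qed.

Lemma Rabs0 : forall z, Rabs (z - z) = 0.
Proof. intros; rewrite Rminus_diag; apply Rabs_R0. Qed.

Lemma C_tx G x y t : Ck 2 G -> 0 < t -> dt (dx G) x y t = dx (dt G) x y t.
Proof.
  intros H hpos.
  assert (H1 : Ck 1 G) by (eapply Ck_le; [|exact H]; lia).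
  assert (Hx : Ck 1 (dx G)) by (apply Ck_dx, H).
  assert (Ht : Ck 1 (dt G)) by (apply Ck_dt, H).
  symmetry.
  apply (schwarz_loc (fun u v => G u y v) x t t (fun u v => dx G u y v) (fun u v => dt G u y v)
     (fun u v => dt (dx G) u y v) (fun u v => dx (dt G) u y v) hpos).
  - intros u v hv. apply Rabs_def2 in hv. assert (0 < v) by lra.
    split; [|split; [|split]].
    + apply dlx; auto.
    + apply dlt; auto.
    + apply dlx; auto.
    + apply dlt; auto.
  - intros eps he. destruct (Ck_cont _ _ (Ck_dx _ _ Ht) x y t hpos eps he) as [d [hd hh]].
    exists d; split; auto. intros u v hu hv. apply hh; auto. rewrite Rabs0; auto.
  - intros eps he. destruct (Ck_cont _ _ (Ck_dt _ _ Hx) x y t hpos eps he) as [d [hd hh]].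
    exists d; split; auto. intros u v hu hv. apply hh; auto. rewrite Rabs0; auto.
Qed.

Lemma C_ty G x y t : Ck 2 G -> 0 < t -> dt (dy G) x y t = dy (dt G) x y t.
Proof.
  intros H hpos.
  assert (H1 : Ck 1 G) by (eapply Ck_le; [|exact H]; lia).
  assert (Hx : Ck 1 (dy G)) by (apply Ck_dy, H).
  assert (Ht : Ck 1 (dt G)) by (apply Ck_dt, H).
  symmetry.
  apply (schwarz_loc (fun u v => G x u v) y t t (fun u v => dy G x u v) (fun u v => dt G x u v)
     (fun u v => dt (dy G) x u v) (fun u v => dy (dt G) x u v) hpos).
  - intros u v hv. apply Rabs_def2 in hv. assert (0 < v) by lra.
    split; [|split; [|split]].
    + apply dly; auto.
    + apply dlt; auto.
    + apply dly; auto.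
    + apply dlt; auto.
  - intros eps he. destruct (Ck_cont _ _ (Ck_dy _ _ Ht) x y t hpos eps he) as [d [hd hh]].
    exists d; split; auto. intros u v hu hv. apply hh; auto. rewrite Rabs0; auto.
  - intros eps he. destruct (Ck_cont _ _ (Ck_dt _ _ Hx) x y t hpos eps he) as [d [hd hh]].
    exists d; split; auto. intros u v hu hv. apply hh; auto. rewrite Rabs0; auto.
Qed.

Lemma C_xy G x y t : Ck 2 G -> 0 < t -> dx (dy G) x y t = dy (dx G) x y t.
Proof.
  intros H hpos.
  assert (H1 : Ck 1 G) by (eapply Ck_le; [|exact H]; lia).
  assert (Hx : Ck 1 (dx G)) by (apply Ck_dx, H).
  assert (Hy : Ck 1 (dy G)) by (apply Ck_dy, H).
  apply (schwarz_loc (fun u v => G u v t) x y 1 (fun u v => dx G u v t) (fun u v => dy G u v t)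
     (fun u v => dy (dx G) u v t) (fun u v => dx (dy G) u v t) Rlt_0_1).
  - intros u v hv.
    split; [|split; [|split]].
    + apply dlx; auto.
    + apply dly; auto.
    + apply dlx; auto.
    + apply dly; auto.
  - intros eps he. destruct (Ck_cont _ _ (Ck_dx _ _ Hy) x y t hpos eps he) as [d [hd hh]].
    exists d; split; auto. intros u v hu hv. apply hh; auto. rewrite Rabs0; auto.
  - intros eps he. destruct (Ck_cont _ _ (Ck_dy _ _ Hx) x y t hpos eps he) as [d [hd hh]].
    exists d; split; auto. intros u v hu hv. apply hh; auto. rewrite Rabs0; auto.
Qed.

Definition Pd (f1 f2 f3 f4 : fun3) : fun3 := fun x y t => f1 x y t + f2 x y t + f3 x y t + f4 x y t.
Definition Q1d (f1 f2 f3 f4 : fun3) : fun3 := fun x y t => f1 x y t + f2 x y t - f3 x y t - f4 x y t.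
Definition Q2d (f1 f2 f3 f4 : fun3) : fun3 := fun x y t => f1 x y t - f2 x y t + f3 x y t - f4 x y t.
Definition Rd (f1 f2 f3 f4 : fun3) : fun3 := fun x y t => f1 x y t - f2 x y t - f3 x y t + f4 x y t.
Definition Sd (A B : fun3) : fun3 := fun x y t => dx A x y t + dy B x y t.

Lemma Ck_comb4 k a1 a2 a3 a4 f1 f2 f3 f4 : Ck k f1 -> Ck k f2 -> Ck k f3 -> Ck k f4 ->
  Ck k (fun x y t => a1 * f1 x y t + a2 * f2 x y t + a3 * f3 x y t + a4 * f4 x y t).
Proof.
  intros H1 H2 H3 H4.
  eapply Ck_ext; [| apply (Ck_lin k 1 1 _ _ (Ck_lin k a1 a2 _ _ H1 H2) (Ck_lin k a3 a4 _ _ H3 H4))].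
  intros; simpl; ring.
Qed.
Lemma Ck_Sd k A B : Ck (S k) A -> Ck (S k) B -> Ck k (Sd A B).
Proof.
  intros HA HB. eapply Ck_ext; [| apply (Ck_lin k 1 1 _ _ (Ck_dx _ _ HA) (Ck_dy _ _ HB))].
  intros; unfold Sd; ring.
Qed.
Lemma Ck_Lap k q : Ck (S (S k)) q -> Ck k (Lap q).
Proof.
  intros H. eapply Ck_ext; [| apply (Ck_lin k 1 1 _ _ (Ck_dx _ _ (Ck_dx _ _ H)) (Ck_dy _ _ (Ck_dy _ _ H)))].
  intros; unfold Lap; ring.
Qed.

Section Main.
Variables (c : R) (lam lam1 lam2 : R -> R) (fpp fpm fmp fmm : fun3).
Hypothesis hl1 : forall t, 0 < t -> derivable_pt_lim lam t (lam1 t).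
Hypothesis hl2 : forall t, 0 < t -> derivable_pt_lim lam1 t (lam2 t).
Hypotheses (hpp : Ck 4 fpp) (hpm : Ck 4 fpm) (hmp : Ck 4 fmp) (hmm : Ck 4 fmm).
Hypothesis epp : forall x y t, 0 < t -> dt fpp x y t =
     - (c/2) * dx fpp x y t - (c/2) * dy fpp x y t
     + lam t / 2 * (fmp x y t + fpm x y t - 2 * fpp x y t).
Hypothesis epm : forall x y t, 0 < t -> dt fpm x y t =
     - (c/2) * dx fpm x y t + (c/2) * dy fpm x y t
     + lam t / 2 * (fmm x y t + fpp x y t - 2 * fpm x y t).
Hypothesis emp : forall x y t, 0 < t -> dt fmp x y t =
     (c/2) * dx fmp x y t - (c/2) * dy fmp x y t
     + lam t / 2 * (fpp x y t + fmm x y t - 2 * fmp x y t).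
Hypothesis emm : forall x y t, 0 < t -> dt fmm x y t =
     (c/2) * dx fmm x y t + (c/2) * dy fmm x y t
     + lam t / 2 * (fpm x y t + fmp x y t - 2 * fmm x y t).

Local Notation P := (Pd fpp fpm fmp fmm).
Local Notation Q1 := (Q1d fpp fpm fmp fmm).
Local Notation Q2 := (Q2d fpp fpm fmp fmm).
Local Notation RR := (Rd fpp fpm fmp fmm).
Local Notation S := (Sd Q1 Q2).
Local Notation V := (Sd Q2 Q1).

Lemma CkP : Ck 4 P.
Proof. eapply Ck_ext; [|apply (Ck_comb4 4 1 1 1 1 _ _ _ _ hpp hpm hmp hmm)]. intros; unfold Pd; ring. Qed.
Lemma CkQ1 : Ck 4 Q1.
Proof. eapply Ck_ext; [|apply (Ck_comb4 4 1 1 (-1) (-1) _ _ _ _ hpp hpm hmp hmm)]. intros; unfold Q1d; ring. Qed.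
Lemma CkQ2 : Ck 4 Q2.
Proof. eapply Ck_ext; [|apply (Ck_comb4 4 1 (-1) 1 (-1) _ _ _ _ hpp hpm hmp hmm)]. intros; unfold Q2d; ring. Qed.
Lemma CkR : Ck 4 RR.
Proof. eapply Ck_ext; [|apply (Ck_comb4 4 1 (-1) (-1) 1 _ _ _ _ hpp hpm hmp hmm)]. intros; unfold Rd; ring. Qed.
Lemma CkS : Ck 3 S. Proof. apply Ck_Sd; [apply CkQ1|apply CkQ2]. Qed.
Lemma CkV : Ck 3 V. Proof. apply Ck_Sd; [apply CkQ2|apply CkQ1]. Qed.
Lemma CkLP : Ck 2 (Lap P). Proof. apply Ck_Lap, CkP. Qed.
Lemma CkLS : Ck 1 (Lap S). Proof. apply Ck_Lap, CkS. Qed.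

Ltac ck := repeat (apply Ck_dx || apply Ck_dy || apply Ck_dt);
  eapply Ck_le; [|first [eassumption | exact CkP | exact CkQ1 | exact CkQ2 | exact CkR
     | exact CkS | exact CkV | exact CkLP | exact CkLS]]; lia.

Ltac dtac :=
  cbv beta;
  match goal with
  | |- derivable_pt_lim lam _ _ => apply hl1; assumption
  | |- derivable_pt_lim lam1 _ _ => apply hl2; assumption
  | |- derivable_pt_lim (?G ?x ?y) _ _ => apply dlt; [ck | assumption]
  | |- derivable_pt_lim (fun s => lam s) _ _ => apply hl1; assumption
  | |- derivable_pt_lim (fun s => lam1 s) _ _ => apply hl2; assumption
  | |- derivable_pt_lim (fun s => ?G s ?y ?t) _ _ => apply dlx; [ck | assumption]
  | |- derivable_pt_lim (fun s => ?G ?x s ?t) _ _ => apply dly; [ck | assumption]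
  | |- derivable_pt_lim (fun s => ?G ?x ?y s) _ _ => apply dlt; [ck | assumption]
  | |- derivable_pt_lim (fun s => @?A s + @?B s) _ _ => apply dl_plus; dtac
  | |- derivable_pt_lim (fun s => @?A s - @?B s) _ _ => apply dl_minus; dtac
  | |- derivable_pt_lim (fun s => - @?A s) _ _ => apply dl_opp; dtac
  | |- derivable_pt_lim (fun s => ?k * @?B s) _ _ => apply dl_scal; dtac
  | |- derivable_pt_lim (fun s => @?A s * @?B s) _ _ => apply dl_mult; dtac
  | |- derivable_pt_lim (fun s => ?k) _ _ => apply dl_const
  end.

Lemma E1 x y t : 0 < t -> dt P x y t = - (c/2) * (dx Q1 x y t + dy Q2 x y t).
Proof.
  intros h.
  assert (A : dt P x y t = dt fpp x y t + dt fpm x y t + dt fmp x y t + dt fmm x y t).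
  unfold Pd; eapply dt_eq; [dtac | ring].
  assert (B : dx Q1 x y t = dx fpp x y t + dx fpm x y t - dx fmp x y t - dx fmm x y t)
    by (unfold Q1d; eapply dx_eq; [dtac | ring]).
  assert (C : dy Q2 x y t = dy fpp x y t - dy fpm x y t + dy fmp x y t - dy fmm x y t)
    by (unfold Q2d; eapply dy_eq; [dtac | ring]).
  rewrite A, B, C, epp, epm, emp, emm by exact h. ring.
Qed.

Definition K := c / 2.

Lemma E1' x y t : 0 < t -> dt P x y t = - K * S x y t.
Proof. intros h; rewrite E1 by exact h; unfold Sd, K; ring. Qed.

Lemma E2 x y t : 0 < t -> dt Q1 x y t = - K * (dx P x y t + dy RR x y t) - lam t * Q1 x y t.
Proof.
  intros h.
  assert (A : dt Q1 x y t = dt fpp x y t + dt fpm x y t - dt fmp x y t - dt fmm x y t)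
    by (unfold Q1d; eapply dt_eq; [dtac | ring]).
  assert (B : dx P x y t = dx fpp x y t + dx fpm x y t + dx fmp x y t + dx fmm x y t)
    by (unfold Pd; eapply dx_eq; [dtac | ring]).
  assert (C : dy RR x y t = dy fpp x y t - dy fpm x y t - dy fmp x y t + dy fmm x y t)
    by (unfold Rd; eapply dy_eq; [dtac | ring]).
  rewrite A, B, C, epp, epm, emp, emm by exact h. unfold Q1d, K. field.
Qed.

Lemma E3 x y t : 0 < t -> dt Q2 x y t = - K * (dx RR x y t + dy P x y t) - lam t * Q2 x y t.
Proof.
  intros h.
  assert (A : dt Q2 x y t = dt fpp x y t - dt fpm x y t + dt fmp x y t - dt fmm x y t)
    by (unfold Q2d; eapply dt_eq; [dtac | ring]).
  assert (B : dy P x y t = dy fpp x y t + dy fpm x y t + dy fmp x y t + dy fmm x y t)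
    by (unfold Pd; eapply dy_eq; [dtac | ring]).
  assert (C : dx RR x y t = dx fpp x y t - dx fpm x y t - dx fmp x y t + dx fmm x y t)
    by (unfold Rd; eapply dx_eq; [dtac | ring]).
  rewrite A, B, C, epp, epm, emp, emm by exact h. unfold Q2d, K. field.
Qed.

Lemma E4 x y t : 0 < t -> dt RR x y t = - K * (dx Q2 x y t + dy Q1 x y t) - 2 * lam t * RR x y t.
Proof.
  intros h.
  assert (A : dt RR x y t = dt fpp x y t - dt fpm x y t - dt fmp x y t + dt fmm x y t)
    by (unfold Rd; eapply dt_eq; [dtac | ring]).
  assert (B : dx Q2 x y t = dx fpp x y t - dx fpm x y t + dx fmp x y t - dx fmm x y t)
    by (unfold Q2d; eapply dx_eq; [dtac | ring]).
  assert (C : dy Q1 x y t = dy fpp x y t + dy fpm x y t - dy fmp x y t - dy fmm x y t)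
    by (unfold Q1d; eapply dy_eq; [dtac | ring]).
  rewrite A, B, C, epp, epm, emp, emm by exact h. unfold Rd, K. field.
Qed.

Local Notation M := (dx (dy RR)).
Local Notation N := (dx (dy V)).
Local Notation X := (dx (dy (dx (dy P)))).

Ltac ckk := first [assumption | ck].

Lemma Sb x y t : 0 < t -> dt S x y t = - K * (Lap P x y t + 2 * M x y t) - lam t * S x y t.
Proof.
  intros h.
  assert (A : dt S x y t = dt (dx Q1) x y t + dt (dy Q2) x y t)
    by (unfold Sd at 1; eapply dt_eq; [dtac | ring]).
  rewrite A, C_tx, C_ty by ckk.
  assert (B : dx (dt Q1) x y t = - K * (dx (dx P) x y t + dx (dy RR) x y t) - lam t * dx Q1 x y t).
  { transitivity (dx (fun x y t => - K * (dx P x y t + dy RR x y t) - lam t * Q1 x y t) x y t).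
    - apply dx_ext; intros; apply E2; auto.
    - eapply dx_eq; [dtac | ring]. }
  assert (C : dy (dt Q2) x y t = - K * (dy (dx RR) x y t + dy (dy P) x y t) - lam t * dy Q2 x y t).
  { transitivity (dy (fun x y t => - K * (dx RR x y t + dy P x y t) - lam t * Q2 x y t) x y t).
    - apply dy_ext; intros; apply E3; auto.
    - eapply dy_eq; [dtac | ring]. }
  rewrite B, C, <- (C_xy RR) by ckk. unfold Lap, Sd. ring.
Qed.

Lemma Mc x y t : 0 < t -> dt M x y t = - K * N x y t - 2 * lam t * M x y t.
Proof.
  intros h.
  rewrite C_tx by ckk.
  assert (A : forall s, dy (dt RR) s y t = - K * (dy (dx Q2) s y t + dy (dy Q1) s y t) - 2 * lam t * dy RR s y t).
  { intros s. transitivity (dy (fun x y t => - K * (dx Q2 x y t + dy Q1 x y t) - 2 * lam t * RR x y t) s y t).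
    - apply dy_ext; intros; apply E4; auto.
    - eapply dy_eq; [dtac | ring]. }
  assert (B : dx (dt (dy RR)) x y t = - K * (dx (dy (dx Q2)) x y t + dx (dy (dy Q1)) x y t) - 2 * lam t * dx (dy RR) x y t).
  { transitivity (dx (fun x y t => - K * (dy (dx Q2) x y t + dy (dy Q1) x y t) - 2 * lam t * dy RR x y t) x y t).
    - apply dx_ext; intros s. rewrite C_ty by ckk. apply A.
    - eapply dx_eq; [dtac | ring]. }
  assert (C : dx (dy V) x y t = dx (dy (dx Q2)) x y t + dx (dy (dy Q1)) x y t).
  { transitivity (dx (fun x y t => dy (dx Q2) x y t + dy (dy Q1) x y t) x y t).
    - apply dx_ext; intros s. unfold Sd at 1. eapply dy_eq; [dtac | ring].
    - eapply dx_eq; [dtac | ring]. }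
  rewrite B, C. ring.
Qed.

Lemma Vt x y t : 0 < t -> dt V x y t =
  - K * (dx (dx RR) x y t + dx (dy P) x y t + dy (dx P) x y t + dy (dy RR) x y t) - lam t * V x y t.
Proof.
  intros h.
  assert (A : dt V x y t = dt (dx Q2) x y t + dt (dy Q1) x y t)
    by (unfold Sd at 1; eapply dt_eq; [dtac | ring]).
  rewrite A, C_tx, C_ty by ckk.
  assert (B : dx (dt Q2) x y t = - K * (dx (dx RR) x y t + dx (dy P) x y t) - lam t * dx Q2 x y t).
  { transitivity (dx (fun x y t => - K * (dx RR x y t + dy P x y t) - lam t * Q2 x y t) x y t).
    - apply dx_ext; intros; apply E3; auto.
    - eapply dx_eq; [dtac | ring]. }
  assert (C : dy (dt Q1) x y t = - K * (dy (dx P) x y t + dy (dy RR) x y t) - lam t * dy Q1 x y t).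
  { transitivity (dy (fun x y t => - K * (dx P x y t + dy RR x y t) - lam t * Q1 x y t) x y t).
    - apply dy_ext; intros; apply E2; auto.
    - eapply dy_eq; [dtac | ring]. }
  rewrite B, C. unfold Sd. ring.
Qed.

Lemma Nd x y t : 0 < t -> dt N x y t = - K * (Lap M x y t + 2 * X x y t) - lam t * N x y t.
Proof.
  intros h.
  rewrite C_tx by ckk.
  assert (A : forall s, dy (dt V) s y t = - K * (dy (dx (dx RR)) s y t + dy (dx (dy P)) s y t
        + dy (dy (dx P)) s y t + dy (dy (dy RR)) s y t) - lam t * dy V s y t).
  { intros s. transitivity (dy (fun x y t => - K * (dx (dx RR) x y t + dx (dy P) x y t + dy (dx P) x y t + dy (dy RR) x y t) - lam t * V x y t) s y t).
    - apply dy_ext; intros; apply Vt; auto.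
    - eapply dy_eq; [dtac | ring]. }
  assert (B : dx (dt (dy V)) x y t = - K * (dx (dy (dx (dx RR))) x y t + dx (dy (dx (dy P))) x y t
        + dx (dy (dy (dx P))) x y t + dx (dy (dy (dy RR))) x y t) - lam t * dx (dy V) x y t).
  { transitivity (dx (fun x y t => - K * (dy (dx (dx RR)) x y t + dy (dx (dy P)) x y t
        + dy (dy (dx P)) x y t + dy (dy (dy RR)) x y t) - lam t * dy V x y t) x y t).
    - apply dx_ext; intros s. rewrite C_ty by ckk. apply A.
    - eapply dx_eq; [dtac | ring]. }
  assert (K1 : dx (dy (dx (dx RR))) x y t = dx (dx M) x y t).
  { apply dx_ext; intros s. rewrite <- C_xy by ckk. apply dx_ext; intros s'.
    rewrite <- C_xy by ckk. reflexivity. }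
  assert (K2 : dx (dy (dy (dy RR))) x y t = dy (dy M) x y t).
  { rewrite C_xy by ckk. apply dy_ext; intros s. rewrite C_xy by ckk. reflexivity. }
  assert (K3 : dx (dy (dy (dx P))) x y t = X x y t).
  { apply dx_ext; intros s. apply dy_ext; intros s'. rewrite <- C_xy by ckk. reflexivity. }
  rewrite B, K1, K2, K3. unfold Lap. ring.
Qed.

Lemma LPt x y t : 0 < t -> dt (Lap P) x y t = - K * Lap S x y t.
Proof.
  intros h.
  assert (A : dt (Lap P) x y t = dt (dx (dx P)) x y t + dt (dy (dy P)) x y t)
    by (unfold Lap at 1; eapply dt_eq; [dtac | ring]).
  assert (B : dt (dx (dx P)) x y t = - K * dx (dx S) x y t).
  { rewrite C_tx by ckk.
    transitivity (dx (fun x y t => - K * dx S x y t) x y t).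
    - apply dx_ext; intros s. rewrite C_tx by ckk.
      transitivity (dx (fun x y t => - K * S x y t) s y t).
      + apply dx_ext; intros; apply E1'; auto.
      + eapply dx_eq; [dtac | ring].
    - eapply dx_eq; [dtac | ring]. }
  assert (C : dt (dy (dy P)) x y t = - K * dy (dy S) x y t).
  { rewrite C_ty by ckk.
    transitivity (dy (fun x y t => - K * dy S x y t) x y t).
    - apply dy_ext; intros s. rewrite C_ty by ckk.
      transitivity (dy (fun x y t => - K * S x y t) x s t).
      + apply dy_ext; intros; apply E1'; auto.
      + eapply dy_eq; [dtac | ring].
    - eapply dy_eq; [dtac | ring]. }
  rewrite A, B, C. unfold Lap. ring.
Qed.

Lemma LSt x y t : 0 < t -> dt (Lap S) x y t =
   - K * (Lap (Lap P) x y t + 2 * Lap M x y t) - lam t * Lap S x y t.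
Proof.
  intros h.
  assert (A : dt (Lap S) x y t = dt (dx (dx S)) x y t + dt (dy (dy S)) x y t)
    by (unfold Lap at 1; eapply dt_eq; [dtac | ring]).
  assert (B : dt (dx (dx S)) x y t =
     - K * (dx (dx (Lap P)) x y t + 2 * dx (dx M) x y t) - lam t * dx (dx S) x y t).
  { rewrite C_tx by ckk.
    transitivity (dx (fun x y t => - K * (dx (Lap P) x y t + 2 * dx M x y t) - lam t * dx S x y t) x y t).
    - apply dx_ext; intros s. rewrite C_tx by ckk.
      transitivity (dx (fun x y t => - K * (Lap P x y t + 2 * M x y t) - lam t * S x y t) s y t).
      + apply dx_ext; intros; apply Sb; auto.
      + eapply dx_eq; [dtac | ring].
    - eapply dx_eq; [dtac | ring]. }
  assert (C : dt (dy (dy S)) x y t =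
     - K * (dy (dy (Lap P)) x y t + 2 * dy (dy M) x y t) - lam t * dy (dy S) x y t).
  { rewrite C_ty by ckk.
    transitivity (dy (fun x y t => - K * (dy (Lap P) x y t + 2 * dy M x y t) - lam t * dy S x y t) x y t).
    - apply dy_ext; intros s. rewrite C_ty by ckk.
      transitivity (dy (fun x y t => - K * (Lap P x y t + 2 * M x y t) - lam t * S x y t) x s t).
      + apply dy_ext; intros; apply Sb; auto.
      + eapply dy_eq; [dtac | ring].
    - eapply dy_eq; [dtac | ring]. }
  rewrite A, B, C. unfold Lap. ring.
Qed.

Lemma HH x y t : 0 < t -> Hyp (Hyp P) x y t = Lap (Lap P) x y t - 4 * X x y t.
Proof.
  intros h.
  assert (A : forall s, dx (Hyp P) s y t = dx (dx (dx P)) s y t - dx (dy (dy P)) s y t)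
    by (intros s; unfold Hyp at 1; eapply dx_eq; [dtac | ring]).
  assert (A2 : dx (dx (Hyp P)) x y t = dx (dx (dx (dx P))) x y t - dx (dx (dy (dy P))) x y t).
  { transitivity (dx (fun x y t => dx (dx (dx P)) x y t - dx (dy (dy P)) x y t) x y t).
    - apply dx_ext; intros; apply A.
    - eapply dx_eq; [dtac | ring]. }
  assert (B : forall s, dy (Hyp P) x s t = dy (dx (dx P)) x s t - dy (dy (dy P)) x s t)
    by (intros s; unfold Hyp at 1; eapply dy_eq; [dtac | ring]).
  assert (B2 : dy (dy (Hyp P)) x y t = dy (dy (dx (dx P))) x y t - dy (dy (dy (dy P))) x y t).
  { transitivity (dy (fun x y t => dy (dx (dx P)) x y t - dy (dy (dy P)) x y t) x y t).
    - apply dy_ext; intros; apply B.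
    - eapply dy_eq; [dtac | ring]. }
  assert (C : forall s, dx (Lap P) s y t = dx (dx (dx P)) s y t + dx (dy (dy P)) s y t)
    by (intros s; unfold Lap at 1; eapply dx_eq; [dtac | ring]).
  assert (C2 : dx (dx (Lap P)) x y t = dx (dx (dx (dx P))) x y t + dx (dx (dy (dy P))) x y t).
  { transitivity (dx (fun x y t => dx (dx (dx P)) x y t + dx (dy (dy P)) x y t) x y t).
    - apply dx_ext; intros; apply C.
    - eapply dx_eq; [dtac | ring]. }
  assert (D : forall s, dy (Lap P) x s t = dy (dx (dx P)) x s t + dy (dy (dy P)) x s t)
    by (intros s; unfold Lap at 1; eapply dy_eq; [dtac | ring]).
  assert (D2 : dy (dy (Lap P)) x y t = dy (dy (dx (dx P))) x y t + dy (dy (dy (dy P))) x y t).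
  { transitivity (dy (fun x y t => dy (dx (dx P)) x y t + dy (dy (dy P)) x y t) x y t).
    - apply dy_ext; intros; apply D.
    - eapply dy_eq; [dtac | ring]. }
  assert (X1 : dx (dx (dy (dy P))) x y t = X x y t).
  { apply dx_ext; intros s. rewrite C_xy by ckk. reflexivity. }
  assert (X2 : dy (dy (dx (dx P))) x y t = X x y t).
  { assert (W : forall s s', dy (dx (dx P)) s s' t = dx (dx (dy P)) s s' t).
    { intros s s'. rewrite <- C_xy by ckk. apply dx_ext; intros s''. rewrite <- C_xy by ckk. reflexivity. }
    transitivity (dy (dx (dx (dy P))) x y t).
    - apply dy_ext; intros; apply W.
    - rewrite <- C_xy by ckk. reflexivity. }
  unfold Hyp at 1, Lap at 1. rewrite A2, B2, C2, D2, X1, X2. ring.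
Qed.

Lemma T2 x y t : 0 < t -> dt (dt P) x y t = K^2 * (Lap P x y t + 2 * M x y t) + K * lam t * S x y t.
Proof.
  intros h.
  transitivity (dt (fun x y t => - K * S x y t) x y t).
  - apply dt_ext; auto. intros; apply E1'; auto.
  - eapply dt_eq; [dtac | cbv beta]. rewrite Sb by auto. ring.
Qed.

Lemma T3 x y t : 0 < t -> dt (dt (dt P)) x y t =
  - K^3 * Lap S x y t - 2 * K^3 * N x y t - 6 * K^2 * lam t * M x y t
  - K^2 * lam t * Lap P x y t + K * (lam1 t - lam t * lam t) * S x y t.
Proof.
  intros h.
  transitivity (dt (fun x y t => K^2 * (Lap P x y t + 2 * M x y t) + K * lam t * S x y t) x y t).
  - apply dt_ext; auto. intros; apply T2; auto.
  - eapply dt_eq; [dtac | cbv beta]. rewrite LPt, Mc, Sb by auto. ring.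
Qed.

Lemma T4 x y t : 0 < t -> dt (dt (dt (dt P))) x y t =
  K^4 * Lap (Lap P) x y t + 4 * K^4 * Lap M x y t + 2 * K^3 * lam t * Lap S x y t
  + 4 * K^4 * X x y t + 8 * K^3 * lam t * N x y t
  + K^2 * (14 * lam t * lam t - 8 * lam1 t) * M x y t
  + K^2 * (lam t * lam t - 2 * lam1 t) * Lap P x y t
  + K * (lam2 t - 3 * lam t * lam1 t + lam t * lam t * lam t) * S x y t.
Proof.
  intros h.
  transitivity (dt (fun x y t => - K^3 * Lap S x y t - 2 * K^3 * N x y t - 6 * K^2 * lam t * M x y t
    - K^2 * lam t * Lap P x y t + K * (lam1 t - lam t * lam t) * S x y t) x y t).
  - apply dt_ext; auto. intros; apply T3; auto.
  - eapply dt_eq; [dtac | cbv beta]. rewrite LSt, Nd, LPt, Mc, Sb by auto. ring.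
Qed.

Lemma L1 x y t : 0 < t -> Lap (dt P) x y t = - K * Lap S x y t.
Proof.
  intros h. unfold Lap at 1.
  assert (A : dx (dx (dt P)) x y t = - K * dx (dx S) x y t).
  { transitivity (dx (fun x y t => - K * dx S x y t) x y t).
    - apply dx_ext; intros s.
      transitivity (dx (fun x y t => - K * S x y t) s y t).
      + apply dx_ext; intros; apply E1'; auto.
      + eapply dx_eq; [dtac | ring].
    - eapply dx_eq; [dtac | ring]. }
  assert (B : dy (dy (dt P)) x y t = - K * dy (dy S) x y t).
  { transitivity (dy (fun x y t => - K * dy S x y t) x y t).
    - apply dy_ext; intros s.
      transitivity (dy (fun x y t => - K * S x y t) x s t).
      + apply dy_ext; intros; apply E1'; auto.
      + eapply dy_eq; [dtac | ring].
    - eapply dy_eq; [dtac | ring]. }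
  rewrite A, B. unfold Lap. ring.
Qed.

Lemma L2 x y t : 0 < t -> Lap (dt (dt P)) x y t =
   K^2 * (Lap (Lap P) x y t + 2 * Lap M x y t) + K * lam t * Lap S x y t.
Proof.
  intros h. unfold Lap at 1.
  assert (A : dx (dx (dt (dt P))) x y t = K^2 * (dx (dx (Lap P)) x y t + 2 * dx (dx M) x y t) + K * lam t * dx (dx S) x y t).
  { transitivity (dx (fun x y t => K^2 * (dx (Lap P) x y t + 2 * dx M x y t) + K * lam t * dx S x y t) x y t).
    - apply dx_ext; intros s.
      transitivity (dx (fun x y t => K^2 * (Lap P x y t + 2 * M x y t) + K * lam t * S x y t) s y t).
      + apply dx_ext; intros; apply T2; auto.
      + eapply dx_eq; [dtac | ring].
    - eapply dx_eq; [dtac | ring]. }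
  assert (B : dy (dy (dt (dt P))) x y t = K^2 * (dy (dy (Lap P)) x y t + 2 * dy (dy M) x y t) + K * lam t * dy (dy S) x y t).
  { transitivity (dy (fun x y t => K^2 * (dy (Lap P) x y t + 2 * dy M x y t) + K * lam t * dy S x y t) x y t).
    - apply dy_ext; intros s.
      transitivity (dy (fun x y t => K^2 * (Lap P x y t + 2 * M x y t) + K * lam t * S x y t) x s t).
      + apply dy_ext; intros; apply T2; auto.
      + eapply dy_eq; [dtac | ring].
    - eapply dy_eq; [dtac | ring]. }
  rewrite A, B. unfold Lap. ring.
Qed.

Lemma main_sec x y t : 0 < t ->
    dt (dt (dt (dt P))) x y t =
      - 4 * lam t * dt (dt (dt P)) x y t
      + ((c^2/2) * Lap (dt (dt P)) x y t
         - (5 * (lam t)^2 + 4 * lam1 t) * dt (dt P) x y t)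
      + (lam t * c^2 * Lap (dt P) x y t
         - (5 * lam t * lam1 t + 2 * (lam t)^3 + lam2 t) * dt P x y t)
      - (c^4/16) * Hyp (Hyp P) x y t
      + (c^2/2) * ((lam t)^2 + lam1 t) * Lap P x y t.
Proof.
  intros h.
  rewrite T4, T3, L2, T2, L1, E1', HH by auto.
  unfold K. field.
Qed.

End Main.

Theorem theorem5p1 (c : R) (lam lam1 lam2 : R -> R)
  (fpp fpm fmp fmm : R -> R -> R -> R)
  (hc : 0 < c)
  (hl1 : forall t, 0 < t -> derivable_pt_lim lam t (lam1 t))
  (hl2 : forall t, 0 < t -> derivable_pt_lim lam1 t (lam2 t))
  (hl2c : forall t, 0 < t -> continuity_pt lam2 t)
  (hpp : Ck 4 fpp) (hpm : Ck 4 fpm) (hmp : Ck 4 fmp) (hmm : Ck 4 fmm)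
  (epp : forall x y t, 0 < t -> dt fpp x y t =
     - (c/2) * dx fpp x y t - (c/2) * dy fpp x y t
     + lam t / 2 * (fmp x y t + fpm x y t - 2 * fpp x y t))
  (epm : forall x y t, 0 < t -> dt fpm x y t =
     - (c/2) * dx fpm x y t + (c/2) * dy fpm x y t
     + lam t / 2 * (fmm x y t + fpp x y t - 2 * fpm x y t))
  (emp : forall x y t, 0 < t -> dt fmp x y t =
     (c/2) * dx fmp x y t - (c/2) * dy fmp x y t
     + lam t / 2 * (fpp x y t + fmm x y t - 2 * fmp x y t))
  (emm : forall x y t, 0 < t -> dt fmm x y t =
     (c/2) * dx fmm x y t + (c/2) * dy fmm x y t
     + lam t / 2 * (fpm x y t + fmp x y t - 2 * fmm x y t)) :
  let p : R -> R -> R -> R := fun x y t => fpp x y t + fpm x y t + fmp x y t + fmm x y t in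
  forall x y t, 0 < t ->
    dt (dt (dt (dt p))) x y t =
      - 4 * lam t * dt (dt (dt p)) x y t
      + ((c^2/2) * Lap (dt (dt p)) x y t
         - (5 * (lam t)^2 + 4 * lam1 t) * dt (dt p) x y t)
      + (lam t * c^2 * Lap (dt p) x y t
         - (5 * lam t * lam1 t + 2 * (lam t)^3 + lam2 t) * dt p x y t)
      - (c^4/16) * Hyp (Hyp p) x y t
      + (c^2/2) * ((lam t)^2 + lam1 t) * Lap p x y t.
Proof.
  intros p x y t h.
  exact (main_sec c lam lam1 lam2 fpp fpm fmp fmm hl1 hl2 hpp hpm hmp hmm epp epm emp emm x y t h).
Qed.
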